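(* Let $f,g:\mathbb{R}^2\to\mathbb{R}$ be Lipschitz continuous. If the graphons $(J_1,W_1)$ and $(J_2,W_2)$ are isomorphic up to nullsets, then the graphon dynamical systems $\mathcal D(J_1,W_1)$ and $\mathcal D(J_2,W_2)$ are isometric, i.e. there is a bijective isometry between $L^1(J_2)$ and $L^1(J_1)$ mapping trajectories of one system to trajectories of the other.
   Context: A graphon $(J,W)$ consists of a probability space $J=(\Omega,\mathcal A,\mu)$ and a symmetric measurable $W:\Omega\times\Omega\to[0,1]$. The graphon dynamical system $\mathcal D(J,W)$ is the flow on $L^1(J)$ given by $\dot u_x=f\big(u_x,\int_J W(x,y)g(u_x,u_y)\,d\mu(y)\big)$, where for each $t$ the equation holds for almost every $x$. Two graphons $(J_1,W_1)$, $(J_2,W_2)$ are isomorphic up to nullsets if there is a measure preserving map $\varphi:J_1\to J_2$, invertible up to nullsets, with $W_1(x,y)=W_2(\varphi(x),\varphi(y))$ almost everywhere. *)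

(* Defs.v *)
From HB Require Import structures.
From mathcomp Require Import all_boot all_order all_algebra.
From mathcomp Require Import all_classical all_reals all_analysis.
Import Order.TTheory GRing.Theory Num.Theory.
Import numFieldNormedType.Exports.

Set Implicit Arguments.
Unset Strict Implicit.
Unset Printing Implicit Defensive.

Local Open Scope classical_set_scope.
Local Open Scope ring_scope.

Section graphon_defs.
Context (R : realType).

Definition is_graphon d (T : measurableType d) (W : T -> T -> R) : Prop :=
  [/\ measurable_fun setT (fun p : T * T => W p.1 p.2),
      (forall x y, W x y = W y x) &
      (forall x y, 0 <= W x y <= 1)].

Definition measure_preserving d1 d2 (T1 : measurableType d1)
    (T2 : measurableType d2) (mu1 : probability T1 R) (mu2 : probability T2 R)
    (phi : T1 -> T2) : Prop :=
  measurable_fun setT phi /\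
  (forall B : set T2, measurable B -> mu1 (phi @^-1` B) = mu2 B).

Definition graphon_iso_nullsets d1 d2 (T1 : measurableType d1)
    (T2 : measurableType d2) (mu1 : probability T1 R) (W1 : T1 -> T1 -> R)
    (mu2 : probability T2 R) (W2 : T2 -> T2 -> R) : Prop :=
  exists (phi : T1 -> T2) (psi : T2 -> T1),
    [/\ measure_preserving mu1 mu2 phi,
        measure_preserving mu2 mu1 psi,
        {ae mu1, forall x, psi (phi x) = x},
        {ae mu2, forall y, phi (psi y) = y} &
        {ae (mu1 \x mu1)%E, forall p : T1 * T1, W1 p.1 p.2 = W2 (phi p.1) (phi p.2)}].

Definition L1 d (T : measurableType d) (mu : probability T R) (u : T -> R) : Prop :=
  mu.-integrable setT (EFin \o u).

Definition L1dist d (T : measurableType d) (mu : probability T R)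
    (u v : T -> R) : \bar R :=
  (\int[mu]_x (`|u x - v x|%:E))%E.

Definition graphon_field d (T : measurableType d) (mu : probability T R)
    (W : T -> T -> R) (f g : R * R -> R) (u : T -> R) : T -> R :=
  fun x => f (u x, Rintegral mu setT (fun y => W x y * g (u x, u y))).

Definition gds_trajectory d (T : measurableType d) (mu : probability T R)
    (W : T -> T -> R) (f g : R * R -> R) (u : R -> T -> R) : Prop :=
  (forall t, L1 mu (u t)) /\
  (forall t : R,
     (fun h : R => L1dist mu (fun x => (u (t + h) x - u t x) / h)
                              (graphon_field mu W f g (u t)))
       @ 0^' --> 0%E).

(* Phi (acting on representatives) induces a bijective isometry
   L^1(J2) -> L^1(J1): it maps L^1 to L^1, preserves L^1 distances (hence is
   well defined and injective on a.e.-classes) and is onto up to a.e.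
   equality. *)
Definition L1_bij_isometry d2 d1 (T2 : measurableType d2)
    (T1 : measurableType d1) (mu2 : probability T2 R) (mu1 : probability T1 R)
    (Phi : (T2 -> R) -> (T1 -> R)) : Prop :=
  [/\ (forall u, L1 mu2 u -> L1 mu1 (Phi u)),
      (forall u v, L1 mu2 u -> L1 mu2 v ->
         L1dist mu1 (Phi u) (Phi v) = L1dist mu2 u v) &
      (forall w, L1 mu1 w ->
         exists u, L1 mu2 u /\ {ae mu1, forall x, Phi u x = w x})].

End graphon_defs.

(* Main.v *)
Require Import Defs.
From HB Require Import structures.
From mathcomp Require Import all_boot all_order all_algebra.
From mathcomp Require Import all_classical all_reals all_analysis.
From mathcomp Require Import measurable_realfun.
Import Order.TTheory GRing.Theory Num.Theory.
Import numFieldNormedType.Exports.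
Local Open Scope classical_set_scope.
Local Open Scope ring_scope.

Set Implicit Arguments.
Unset Strict Implicit.
Section helpers.
Local Open Scope ereal_scope.
Import HBNNSimple.

Context (R : realType).

Lemma int_mono d (T : measurableType d) (mu : {measure set T -> \bar R})
  (g f : T -> \bar R) : (forall x, 0 <= g x) -> (forall x, g x <= f x) ->
  \int[mu]_x g x <= \int[mu]_x f x.
Proof.
move=> g0 gf; have f0 x : 0 <= f x by exact: le_trans (g0 x) (gf x).
rewrite !ge0_integralTE//; apply: le_ereal_sup => _ [h /= hg <-].
by exists h => //= x; exact: le_trans (hg x) (gf x).
Qed.

Lemma int_ae_le d (T : measurableType d) (mu : {measure set T -> \bar R})
  (f1 f2 : T -> \bar R) : (forall x, 0 <= f1 x) -> (forall x, 0 <= f2 x) ->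
  {ae mu, forall x, f1 x = f2 x} ->
  \int[mu]_x f1 x <= \int[mu]_x f2 x.
Proof.
move=> f10 f20 [N [mN N0 sN]].
rewrite [X in X <= _]ge0_integralTE//; apply: ge_ereal_sup => _ [h /= hf <-].
rewrite -integralT_nnsfun (@ge0_negligible_integral _ _ _ _ setT N)//.
rewrite integral_mkcond; apply: int_mono => x.
  rewrite patchE; case: ifPn => _; first by rewrite lee_fin.
  by [].
rewrite patchE; case: ifPn => //; rewrite inE => -[_ xN].
have -> : f2 x = f1 x.
  apply: contra_notP xN => ne; apply: sN => /= e; exact: ne (esym e).
exact: hf.
- by apply/measurable_EFinP; exact: measurable_funP.
- by move=> x _; rewrite lee_fin.
Qed.

Lemma int_ae_eq d (T : measurableType d) (mu : {measure set T -> \bar R})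
  (f1 f2 : T -> \bar R) : {ae mu, forall x, f1 x = f2 x} ->
  \int[mu]_x f1 x = \int[mu]_x f2 x.
Proof.
move=> ae; rewrite integralE [RHS]integralE; congr (_ - _);
  apply/eqP; rewrite eq_le; apply/andP; split; apply: int_ae_le;
  (try exact: funepos_ge0); (try exact: funeneg_ge0);
  apply: filterS ae => x e; by rewrite ?funeposE ?funenegE e.
Qed.

Lemma int_push_le d1 d2 (T1 : measurableType d1) (T2 : measurableType d2)
  (mu1 : {measure set T1 -> \bar R}) (mu2 : {measure set T2 -> \bar R})
  (phi : T1 -> T2) : measurable_fun setT phi ->
  (forall B, measurable B -> mu1 (phi @^-1` B) = mu2 B) ->
  forall f : T2 -> \bar R, (forall x, 0 <= f x) ->
  \int[mu2]_x f x <= \int[mu1]_x f (phi x).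
Proof.
move=> mphi mp f f0.
rewrite [X in X <= _]ge0_integralTE//; apply: ge_ereal_sup => _ [h /= hf <-].
rewrite -integralT_nnsfun.
rewrite (@eq_measure_integral _ _ _ setT (pushforward mu1 phi)); last first.
  by move=> A mA _; rewrite -mp // pushforwardE.
rewrite ge0_integral_pushforward//; first last.
- by move=> x _; rewrite lee_fin.
- by apply/measurable_EFinP; exact: measurable_funP.
rewrite preimage_setT; apply: int_mono => x /=; first by rewrite lee_fin.
exact: hf.
Qed.

Lemma int_iso d1 d2 (T1 : measurableType d1) (T2 : measurableType d2)
  (mu1 : {measure set T1 -> \bar R}) (mu2 : {measure set T2 -> \bar R})
  (phi : T1 -> T2) (psi : T2 -> T1) : measurable_fun setT phi ->
  (forall B, measurable B -> mu1 (phi @^-1` B) = mu2 B) ->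
  measurable_fun setT psi ->
  (forall B, measurable B -> mu2 (psi @^-1` B) = mu1 B) ->
  {ae mu2, forall y, phi (psi y) = y} ->
  forall f : T2 -> \bar R,
  \int[mu1]_x f (phi x) = \int[mu2]_x f x.
Proof.
move=> mphi mp mpsi mq ae.
have H (f : T2 -> \bar R) : (forall x, 0 <= f x) ->
    \int[mu1]_x f (phi x) = \int[mu2]_x f x.
  move=> f0; apply/eqP; rewrite eq_le; apply/andP; split; last first.
    exact: int_push_le.
  have := @int_push_le _ _ _ _ _ _ psi mpsi mq (fun x => f (phi x)) (fun x => f0 _).
  rewrite (@int_ae_eq _ _ _ (fun y => f (phi (psi y))) f)//.
  by apply: filterS ae => y ->.
move=> f; rewrite integralE [RHS]integralE; congr (_ - _).
- rewrite -H; last exact: funepos_ge0.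
  by apply: eq_integral => x _; rewrite !funeposE.
- rewrite -H; last exact: funeneg_ge0.
  by apply: eq_integral => x _; rewrite !funenegE.
Qed.

Lemma ae_prod_section d (T : measurableType d) (mu : probability T R)
  (P : T -> T -> Prop) :
  {ae (mu \x mu), forall p : T * T, P p.1 p.2} ->
  {ae mu, forall x, {ae mu, forall y, P x y}}.
Proof.
move=> [N [mN N0 sN]].
have mf : measurable_fun setT (fun x => mu (xsection N x)).
  exact: measurable_fun_xsection.
have : \int[mu]_x `|mu (xsection N x)| = 0.
  rewrite -[RHS]N0 /product_measure1; apply: eq_integral => x _.
  by rewrite gee0_abs.
move=> /(ae_eq_integral_abs mu measurableT mf) ae.
apply: filterS ae => x /(_ I) /= Nx0.
exists (xsection N x); split => //.
  exact: measurable_xsection.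
move=> y /= nP; rewrite /xsection /=; apply/mem_set; apply: sN => /=.
exact: nP.
Qed.

End helpers.
Unset Implicit Arguments.
Set Strict Implicit.

Theorem corollary3p13 (R : realType) (f g : R * R -> R)
    (d1 : measure_display) (T1 : measurableType d1) (mu1 : probability T1 R)
    (W1 : T1 -> T1 -> R)
    (d2 : measure_display) (T2 : measurableType d2) (mu2 : probability T2 R)
    (W2 : T2 -> T2 -> R) :
  lipschitz f -> lipschitz g ->
  is_graphon W1 -> is_graphon W2 ->
  graphon_iso_nullsets mu1 W1 mu2 W2 ->
  exists Phi : (T2 -> R) -> (T1 -> R),
    L1_bij_isometry mu2 mu1 Phi /\
    (forall u : R -> T2 -> R, (forall t, L1 mu2 (u t)) ->
       (gds_trajectory mu2 W2 f g u <->
        gds_trajectory mu1 W1 f g (fun t => Phi (u t)))).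
Proof.
move=> _ _ _ _ [phi [psi [[mphi mp] [mpsi mq] ae1 ae2 aeW]]].
have iso := int_iso mphi mp mpsi mq ae2.
have iso' := int_iso mpsi mq mphi mp ae1.
have L1P (u : T2 -> R) : L1 mu2 u -> L1 mu1 (fun x => u (phi x)).
  move=> /integrableP [mu_ iu]; apply/integrableP; split.
    exact: (measurableT_comp mu_ mphi).
  rewrite [X in (X < _)%E](_ : _ = (\int[mu2]_x `|(u x)%:E|)%E) //.
  exact: (iso (fun y => `|(u y)%:E|)%E).
exists (fun u x => u (phi x)); split.
  split.
  - exact: L1P.
  - move=> u v _ _; exact: (iso (fun y => (`|u y - v y|)%:E)).
  - move=> w /integrableP [mw iw]; exists (fun y => w (psi y)); split.
      apply/integrableP; split; first exact: (measurableT_comp mw mpsi).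
      rewrite [X in (X < _)%E](_ : _ = (\int[mu1]_x `|(w x)%:E|)%E) //.
      exact: (iso' (fun y => `|(w y)%:E|)%E).
    by apply: filterS ae1 => x ->.
move=> u Lu.
have E t : (fun h => L1dist mu1 (fun x => (u (t + h) (phi x) - u t (phi x)) / h)
             (graphon_field mu1 W1 f g (fun x => u t (phi x)))) =
           (fun h => L1dist mu2 (fun x => (u (t + h) x - u t x) / h)
             (graphon_field mu2 W2 f g (u t))).
  apply/funext => h.
  have aeF : {ae mu1, forall x, graphon_field mu1 W1 f g (fun x => u t (phi x)) x
                = graphon_field mu2 W2 f g (u t) (phi x)}.
    have := @ae_prod_section _ _ _ mu1 (fun x y => W1 x y = W2 (phi x) (phi y)) aeW.
    apply: filterS => x aex.
    rewrite /graphon_field; congr (f (_, _)); rewrite /Rintegral; congr fine.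
    rewrite (@int_ae_eq _ _ _ _ _ (fun y => (W2 (phi x) (phi y) * g (u t (phi x), u t (phi y)))%:E)).
      exact: (iso (fun z => (W2 (phi x) z * g (u t (phi x), u t z))%:E)).
    by apply: filterS aex => y ->.
  rewrite /L1dist (int_ae_eq (f2 := fun x => (`|(u (t + h) (phi x) - u t (phi x)) / h
      - graphon_field mu2 W2 f g (u t) (phi x)|)%:E)).
    exact: (iso (fun y => (`|(u (t + h) y - u t y) / h - graphon_field mu2 W2 f g (u t) y|)%:E)).
  by apply: filterS aeF => x ->.
split => -[L T]; split => // t.
- exact: L1P.
- by move: (T t); rewrite -E.
- by move: (T t); rewrite /= E.
Qed.
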